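(* Let $X$ be a real Hilbert space, $\mathsf{A}:X\to 2^X$ a maximal monotone operator whose zero set $S$ is nonempty, and $J:=(Id+\mathsf{A})^{-1}$. Let $x_0\in X$, $p\in S$ and $N\in\mathbb{N}\setminus\{0\}$ with $N\geq 2\|x_0-p\|$. For every $k\in\mathbb{N}$ and every monotone function $f:\mathbb{N}\to\mathbb{N}$ there exist $n\leq 24N\big(w_{f,N}^{(R)}(0)+1\big)^2$ and $x\in B_N$ such that $$\|J(x)-x\|\leq\frac{1}{f(n)+1}\quad\text{and}\quad\forall y\in B_N\ \left(\|J(y)-y\|\leq\frac{1}{n+1}\ \to\ \langle x_0-x,\,y-x\rangle\leq\frac{1}{k+1}\right),$$ where $R:=4N^4(k+1)^2$ and $w_{f,N}(m):=\max\{f(24N(m+1)^2),\,24N(m+1)^2\}$.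
   Context: $S:=\{x\in X: 0\in\mathsf{A}(x)\}$. The resolvent $J=(Id+\mathsf A)^{-1}$ is a single-valued nonexpansive map on $X$ whose fixed point set is $S$. $B_N:=\{x\in X:\ \|x-p\|\leq N\}$. A function $f:\mathbb{N}\to\mathbb{N}$ is monotone if $f(n)\leq f(n+1)$ for all $n$. $g^{(R)}$ is the $R$-fold composition of $g$ with itself ($g^{(0)}$ the identity). *)

(* Defs.v *)
From Stdlib Require Import Reals Lra.
Open Scope R_scope.

Record HilbertSpace := {
  carrier :> Type;
  hzero : carrier;
  hadd : carrier -> carrier -> carrier;
  hopp : carrier -> carrier;
  hscal : R -> carrier -> carrier;
  hinner : carrier -> carrier -> R;
  hadd_assoc : forall x y z, hadd x (hadd y z) = hadd (hadd x y) z;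
  hadd_comm : forall x y, hadd x y = hadd y x;
  hadd_0 : forall x, hadd x hzero = x;
  hadd_opp : forall x, hadd x (hopp x) = hzero;
  hscal_assoc : forall a b x, hscal a (hscal b x) = hscal (a * b) x;
  hscal_1 : forall x, hscal 1 x = x;
  hscal_distr_vec : forall a x y, hscal a (hadd x y) = hadd (hscal a x) (hscal a y);
  hscal_distr_scal : forall a b x, hscal (a + b) x = hadd (hscal a x) (hscal b x);
  hinner_sym : forall x y, hinner x y = hinner y x;
  hinner_add_l : forall x y z, hinner (hadd x y) z = hinner x z + hinner y z;
  hinner_scal_l : forall a x y, hinner (hscal a x) y = a * hinner x y;
  hinner_nonneg : forall x, 0 <= hinner x x;
  hinner_def : forall x, hinner x x = 0 -> x = hzero;
  hcomplete : forall u : nat -> carrier,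
    (forall eps, 0 < eps -> exists M, forall m n, (M <= m)%nat -> (M <= n)%nat ->
        sqrt (hinner (hadd (u m) (hopp (u n))) (hadd (u m) (hopp (u n)))) < eps) ->
    exists l, forall eps, 0 < eps -> exists M, forall n, (M <= n)%nat ->
        sqrt (hinner (hadd (u n) (hopp l)) (hadd (u n) (hopp l))) < eps
}.

Arguments hzero {_}. Arguments hadd {_}. Arguments hopp {_}.
Arguments hscal {_}. Arguments hinner {_}.

Definition hsub {X : HilbertSpace} (x y : X) : X := hadd x (hopp y).
Definition hnorm {X : HilbertSpace} (x : X) : R := sqrt (hinner x x).

(** A set-valued operator A : X -> 2^X, encoded as a relation: A x u means u ∈ A(x). *)
Definition SetOp (X : HilbertSpace) := X -> X -> Prop.

Definition monotone_op {X : HilbertSpace} (A : SetOp X) : Prop :=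
  forall x y u v, A x u -> A y v -> 0 <= hinner (hsub x y) (hsub u v).

Definition maximal_monotone {X : HilbertSpace} (A : SetOp X) : Prop :=
  monotone_op A /\
  forall x u, (forall y v, A y v -> 0 <= hinner (hsub x y) (hsub u v)) -> A x u.

Definition zeros {X : HilbertSpace} (A : SetOp X) (x : X) : Prop := A x hzero.

(** J is the resolvent (Id + A)^{-1}: x ∈ J(x) + A(J(x)), i.e. x - J x ∈ A (J x).
    For maximal monotone A this determines J uniquely as a total function. *)
Definition is_resolvent {X : HilbertSpace} (A : SetOp X) (J : X -> X) : Prop :=
  forall x, A (J x) (hsub x (J x)).

Definition in_ball {X : HilbertSpace} (p : X) (N : nat) (x : X) : Prop :=
  hnorm (hsub x p) <= INR N.

Definition monotone_fun (f : nat -> nat) : Prop := forall n, (f n <= f (S n))%nat.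

Definition w_fun (f : nat -> nat) (N : nat) (m : nat) : nat :=
  Nat.max (f (24 * N * (m + 1) ^ 2)%nat) (24 * N * (m + 1) ^ 2)%nat.

(* Main.v *)
Require Import Defs.
From Stdlib Require Import Reals Lra Lia Classical.
Open Scope R_scope.

Definition nm {X : HilbertSpace} (v : X) : R := hinner v v.

Lemma inner0l {X : HilbertSpace} (y : X) : hinner hzero y = 0.
Proof. pose proof (hinner_add_l X hzero hzero y) as H. rewrite hadd_0 in H. lra. Qed.
Lemma inner_opp_l {X : HilbertSpace} (x y : X) : hinner (hopp x) y = - hinner x y.
Proof. pose proof (hinner_add_l X x (hopp x) y) as H. rewrite hadd_opp, inner0l in H. lra. Qed.
Lemma inner_add_r {X : HilbertSpace} (x y z : X) : hinner x (hadd y z) = hinner x y + hinner x z.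
Proof. rewrite (hinner_sym X x (hadd y z)), hinner_add_l, (hinner_sym X y x), (hinner_sym X z x). ring. Qed.
Lemma inner_opp_r {X : HilbertSpace} (x y : X) : hinner x (hopp y) = - hinner x y.
Proof. rewrite (hinner_sym X x (hopp y)), inner_opp_l, (hinner_sym X y x). ring. Qed.
Lemma inner_scal_r {X : HilbertSpace} a (x y : X) : hinner x (hscal a y) = a * hinner x y.
Proof. rewrite (hinner_sym X x (hscal a y)), hinner_scal_l, (hinner_sym X y x). ring. Qed.
Lemma inner0r {X : HilbertSpace} (y : X) : hinner y hzero = 0.
Proof. rewrite hinner_sym. apply inner0l. Qed.

Ltac hexp := unfold hsub, nm in *;
  repeat progress rewrite ?hinner_add_l, ?inner_add_r, ?inner_opp_l, ?inner_opp_r,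
     ?hinner_scal_l, ?inner_scal_r, ?inner0l, ?inner0r in *.
Ltac hexpg := unfold hsub, nm;
  repeat progress rewrite ?hinner_add_l, ?inner_add_r, ?inner_opp_l, ?inner_opp_r,
     ?hinner_scal_l, ?inner_scal_r, ?inner0l, ?inner0r.
Ltac sy X a b := rewrite ?(hinner_sym X b a) in *.

Lemma nm_nonneg {X : HilbertSpace} (v : X) : 0 <= nm v.
Proof. apply hinner_nonneg. Qed.

Lemma hnorm_sq {X : HilbertSpace} (v : X) c : hnorm v <= c -> nm v <= c ^ 2.
Proof. intros H. unfold hnorm in H. pose proof (nm_nonneg v).
  pose proof (sqrt_pos (hinner v v)). rewrite <- (sqrt_sqrt (nm v)) by lra.
  unfold nm in *. nra. Qed.

Lemma sq_hnorm {X : HilbertSpace} (v : X) c : 0 <= c -> nm v <= c ^ 2 -> hnorm v <= c.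
Proof. intros Hc H. unfold hnorm. rewrite <- (sqrt_pow2 c Hc). apply sqrt_le_1_alt. exact H. Qed.

Lemma fne {X : HilbertSpace} (A : SetOp X) J (hA : monotone_op A) (hJ : is_resolvent A J) u v :
  nm (hsub (J u) (J v)) <= nm (hsub u v).
Proof.
  pose proof (hA _ _ _ _ (hJ u) (hJ v)) as H.
  pose proof (hinner_nonneg X (hsub (hsub u (J u)) (hsub v (J v)))) as H2.
  hexp.
  sy X u v; sy X u (J u); sy X u (J v); sy X v (J u); sy X v (J v); sy X (J u) (J v).
  lra.
Qed.

Lemma young {X : HilbertSpace} (a b : X) s : 0 < s -> nm (hadd a b) <= (1 + s) * nm a + (1 + / s) * nm b.
Proof.
  intros Hs. pose proof (hinner_nonneg X (hadd (hscal s a) (hopp b))) as H.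
  hexp. sy X a b.
  set (A0 := hinner a a) in *. set (B0 := hinner b b) in *. set (C := hinner a b) in *.
  assert (0 <= / s * (s * (s * A0) - s * C - s * C + B0)).
  { apply Rmult_le_pos. left; apply Rinv_0_lt_compat; lra. lra. }
  replace (/ s * (s * (s * A0) - s * C - s * C + B0)) with (s * A0 - 2 * C + / s * B0) in H0 by (field; lra).
  lra.
Qed.

Lemma chain_id {X : HilbertSpace} (u v x : X) : nm (hadd (hsub u v) (hsub v x)) = nm (hsub u x).
Proof. hexpg. sy X u v; sy X u x; sy X v x. ring. Qed.

Lemma nm_sym {X : HilbertSpace} (u v : X) : nm (hsub u v) = nm (hsub v u).
Proof. hexpg. sy X u v. ring. Qed.

Lemma comb_id {X : HilbertSpace} (w x y : X) t :
  nm (hsub w (hadd x (hscal t (hsub y x)))) = (1-t)*nm (hsub w x) + t*nm (hsub w y) - t*(1-t)*nm (hsub y x).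
Proof. hexpg. sy X w x; sy X w y; sy X x y. ring. Qed.

Lemma comb_id2 {X : HilbertSpace} (w x y : X) t :
  nm (hsub (hadd x (hscal t (hsub y x))) w) = (1-t)*nm (hsub x w) + t*nm (hsub y w) - t*(1-t)*nm (hsub y x).
Proof. hexpg. sy X w x; sy X w y; sy X x y. ring. Qed.

Lemma zx_id {X : HilbertSpace} (x y : X) t :
  nm (hsub (hadd x (hscal t (hsub y x))) x) = t^2 * nm (hsub y x).
Proof. hexpg. sy X x y. ring. Qed.

Lemma zy_id {X : HilbertSpace} (x y : X) t :
  nm (hsub (hadd x (hscal t (hsub y x))) y) = (1-t)^2 * nm (hsub y x).
Proof. hexpg. sy X x y. ring. Qed.

Lemma dec_id {X : HilbertSpace} (x0 x y : X) t :
  nm (hsub x0 (hadd x (hscal t (hsub y x)))) =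
  nm (hsub x0 x) - 2 * t * hinner (hsub x0 x) (hsub y x) + t^2 * nm (hsub y x).
Proof. hexpg. sy X x0 x; sy X x0 y; sy X x y. ring. Qed.

Lemma tri2 {X : HilbertSpace} (u v p : X) : nm (hsub u v) <= 2 * nm (hsub u p) + 2 * nm (hsub v p).
Proof. pose proof (hinner_nonneg X (hadd (hsub u p) (hsub v p))) as H. hexp.
  sy X u v; sy X u p; sy X v p. lra. Qed.

Lemma tol {X : HilbertSpace} (A : SetOp X) J (hA : monotone_op A) (hJ : is_resolvent A J) x y t e :
  0 < e -> 0 <= t <= 1 -> nm (hsub (J x) x) <= e^2 -> nm (hsub (J y) y) <= e^2 ->
  nm (hsub (J (hadd x (hscal t (hsub y x)))) (hadd x (hscal t (hsub y x)))) <= e * (t * nm (hsub y x)) + e^2 + e.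
Proof.
  intros He Ht Hx Hy.
  set (z := hadd x (hscal t (hsub y x))).
  set (w := J z).
  pose proof (young (hsub w (J x)) (hsub (J x) x) e He) as Y1.
  pose proof (young (hsub w (J y)) (hsub (J y) y) e He) as Y2.
  rewrite chain_id in Y1, Y2.
  pose proof (fne A J hA hJ z x) as F1. pose proof (fne A J hA hJ z y) as F2.
  fold w in F1, F2.
  unfold z in F1, F2. rewrite zx_id in F1. rewrite zy_id in F2.
  unfold w, z. rewrite comb_id. fold z. fold w.
  set (D := nm (hsub y x)) in *.
  set (Dx := nm (hsub w x)) in *. set (Dy := nm (hsub w y)) in *.
  pose proof (nm_nonneg (hsub y x)) as HD. fold D in HD.
  assert (Bx : Dx <= (1+e) * (t^2 * D) + (1 + / e) * e^2).
  { eapply Rle_trans. exact Y1. apply Rplus_le_compat. apply Rmult_le_compat_l; lra.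
    apply Rmult_le_compat_l; [|lra]. pose proof (Rinv_0_lt_compat e He). lra. }
  assert (By : Dy <= (1+e) * ((1-t)^2 * D) + (1 + / e) * e^2).
  { eapply Rle_trans. exact Y2. apply Rplus_le_compat. apply Rmult_le_compat_l; lra.
    apply Rmult_le_compat_l; [|lra]. pose proof (Rinv_0_lt_compat e He). lra. }
  assert (Cx : (1-t) * Dx <= (1-t) * ((1+e) * (t^2 * D) + (1 + / e) * e^2)) by (apply Rmult_le_compat_l; lra).
  assert (Cy : t * Dy <= t * ((1+e) * ((1-t)^2 * D) + (1 + / e) * e^2)) by (apply Rmult_le_compat_l; lra).
  assert (E : (1-t) * ((1+e) * (t^2 * D) + (1 + / e) * e^2) + t * ((1+e) * ((1-t)^2 * D) + (1 + / e) * e^2)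
     - t * (1-t) * D = e * t * (1 - t) * D + e^2 + e) by (field; lra).
  assert (0 <= e * t * t * D) by (apply Rmult_le_pos; [apply Rmult_le_pos; [apply Rmult_le_pos|]|]; lra).
  nra.
Qed.

Lemma iter_S (g : nat -> nat) i : Nat.iter (S i) g 0%nat = g (Nat.iter i g 0%nat).
Proof. reflexivity. Qed.

Lemma inv_mono a b : 0 <= b -> b <= a -> 1 / (a + 1) <= 1 / (b + 1).
Proof. intros. unfold Rdiv. rewrite !Rmult_1_l. apply Rinv_le_contravar; lra. Qed.

Theorem mainTheorem3 (X : HilbertSpace) (A : SetOp X) (J : X -> X)
  (hA : maximal_monotone A) (hS : exists q, zeros A q) (hJ : is_resolvent A J)
  (x0 p : X) (N : nat) (hp : zeros A p) (hN0 : (N <> 0)%nat)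
  (hN : 2 * hnorm (hsub x0 p) <= INR N)
  (k : nat) (f : nat -> nat) (hf : monotone_fun f) :
  let R0 := (4 * N ^ 4 * (k + 1) ^ 2)%nat in
  exists (n : nat) (x : X),
    (n <= 24 * N * (Nat.iter R0 (w_fun f N) 0%nat + 1) ^ 2)%nat /\
    in_ball p N x /\
    hnorm (hsub (J x) x) <= 1 / (INR (f n) + 1) /\
    (forall y : X, in_ball p N y ->
       hnorm (hsub (J y) y) <= 1 / (INR n + 1) ->
       hinner (hsub x0 x) (hsub y x) <= 1 / (INR k + 1)).
Proof.
  intros R0.
  destruct hA as [hmon _].
  set (M := fun i => Nat.iter i (w_fun f N) 0%nat).
  set (nn := fun m => (24 * N * (m + 1) ^ 2)%nat).
  change (Nat.iter R0 (w_fun f N) 0%nat) with (M R0).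
  assert (HMS : forall i, M (S i) = Nat.max (f (nn (M i))) (nn (M i))).
  { intros i. reflexivity. }
  assert (Hnn : forall m, (m <= nn m)%nat) by (intros m; unfold nn; simpl; nia).
  assert (HMm : forall i j, (j <= i)%nat -> (M j <= M i)%nat).
  { induction i; intros j Hj.
    - replace j with 0%nat by lia. lia.
    - destruct (Nat.eq_dec j (S i)) as [->|Hne]; [lia|].
      specialize (IHi j ltac:(lia)). rewrite HMS. specialize (Hnn (M i)). lia. }
  assert (HNpos : 0 < INR N) by (apply lt_0_INR; lia).
  assert (HNge1 : 1 <= INR N) by (apply (le_INR 1); lia).
  assert (Hk : 0 <= INR k) by apply pos_INR.
  set (t := / (4 * INR N ^ 2 * (INR k + 1))).
  set (dl := / (4 * INR N ^ 2 * (INR k + 1) ^ 2)).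
  assert (Htpos : 0 < t) by (unfold t; apply Rinv_0_lt_compat; nra).
  assert (Htle : t <= 1).
  { unfold t. rewrite <- Rinv_1. apply Rinv_le_contravar; [lra|]. nra. }
  assert (Hdlpos : 0 < dl) by (unfold dl; apply Rinv_0_lt_compat; nra).

  assert (Step : forall i, (i <= R0)%nat -> forall x, in_ball p N x ->
     hnorm (hsub (J x) x) <= 1 / (INR (M (S i)) + 1) ->
     (exists (n : nat) (x : X),
    (n <= 24 * N * (M R0 + 1) ^ 2)%nat /\
    in_ball p N x /\
    hnorm (hsub (J x) x) <= 1 / (INR (f n) + 1) /\
    (forall y : X, in_ball p N y ->
       hnorm (hsub (J y) y) <= 1 / (INR n + 1) ->
       hinner (hsub x0 x) (hsub y x) <= 1 / (INR k + 1)))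
     \/ exists z, in_ball p N z /\ hnorm (hsub (J z) z) <= 1 / (INR (M i) + 1) /\
          nm (hsub x0 z) <= nm (hsub x0 x) - dl).
  { intros i Hi x Hxb Hxt.
    assert (Hle1 : (nn (M i) <= M (S i))%nat) by (rewrite HMS; lia).
    assert (Hle2 : (f (nn (M i)) <= M (S i))%nat) by (rewrite HMS; lia).
    destruct (classic (forall y : X, in_ball p N y ->
       hnorm (hsub (J y) y) <= 1 / (INR (nn (M i)) + 1) ->
       hinner (hsub x0 x) (hsub y x) <= 1 / (INR k + 1))) as [Hall|Hnot].
    - left. exists (nn (M i)), x. split; [|split; [exact Hxb|split; [|exact Hall]]].
      + specialize (HMm R0 i Hi). unfold nn. simpl. nia.
      + eapply Rle_trans; [exact Hxt|]. apply inv_mono; [apply pos_INR|apply le_INR; exact Hle2].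
    - right. apply not_all_ex_not in Hnot. destruct Hnot as [y Hy].
      apply imply_to_and in Hy. destruct Hy as [Hyb Hy].
      apply imply_to_and in Hy. destruct Hy as [Hyt Hc].
      apply Rnot_le_lt in Hc.
      set (e := 1 / (INR (nn (M i)) + 1)) in *.
      assert (Hn0 : 0 <= INR (nn (M i))) by apply pos_INR.
      assert (He : 0 < e) by (unfold e; unfold Rdiv; rewrite Rmult_1_l; apply Rinv_0_lt_compat; lra).
      assert (He1 : e <= 1).
      { unfold e; unfold Rdiv; rewrite Rmult_1_l. rewrite <- Rinv_1. apply Rinv_le_contravar; lra. }
      assert (Hxe : hnorm (hsub (J x) x) <= e).
      { eapply Rle_trans; [exact Hxt|]. apply inv_mono; [apply pos_INR|apply le_INR; exact Hle1]. }
      apply hnorm_sq in Hxe, Hyt. apply hnorm_sq in Hxb as Hxb2. apply hnorm_sq in Hyb as Hyb2.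
      pose proof (tri2 y x p) as HD.
      pose proof (nm_nonneg (hsub y x)) as HD0.
      set (D := nm (hsub y x)) in *.
      exists (hadd x (hscal t (hsub y x))). split; [|split].
      + apply sq_hnorm; [apply pos_INR|]. rewrite comb_id2. fold D.
        pose proof (nm_nonneg (hsub x p)). pose proof (nm_nonneg (hsub y p)).
        assert (0 <= t * (1 - t) * D) by (apply Rmult_le_pos; [apply Rmult_le_pos|]; lra).
        nra.
      + apply sq_hnorm; [unfold Rdiv; rewrite Rmult_1_l; left; apply Rinv_0_lt_compat; pose proof (pos_INR (M i)); lra|].
        eapply Rle_trans. apply (tol A J hmon hJ x y t e He ltac:(lra) Hxe Hyt). fold D.
        assert (HtD : t * D <= 1).
        { assert (t * (4 * INR N ^ 2) = / (INR k + 1)) by (unfold t; field; lra).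
          assert (/ (INR k + 1) <= 1) by (rewrite <- Rinv_1; apply Rinv_le_contravar; lra).
          nra. }
        assert (Hnat : (3 * (M i + 1) ^ 2 <= nn (M i) + 1)%nat) by (unfold nn; simpl; nia).
        apply le_INR in Hnat. rewrite mult_INR, pow_INR, !plus_INR in Hnat.
        replace (INR 3) with 3 in Hnat by (simpl; lra). simpl INR in Hnat.
        pose proof (pos_INR (M i)).
        assert (e * (t * D) + e ^ 2 + e <= 3 * e) by nra.
        eapply Rle_trans; [exact H0|].
        unfold e. replace ((1 / (INR (M i) + 1)) ^ 2) with (/ ((INR (M i) + 1)^2)) by (field; lra).
        replace (3 * (1 / (INR (nn (M i)) + 1))) with (/ ((INR (nn (M i)) + 1) / 3)) by (field; lra).
        apply Rinv_le_contravar; nra.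
      + rewrite dec_id. fold D.
        assert (E1 : t * (1 / (INR k + 1)) = dl) by (unfold t, dl; field; lra).
        assert (E2 : t ^ 2 * (4 * INR N ^ 2) = dl) by (unfold t, dl; field; lra).
        assert (t ^ 2 * D <= t ^ 2 * (4 * INR N ^ 2)) by (apply Rmult_le_compat_l; nra).
        nra. }
  assert (Claim : forall i, (i <= R0)%nat -> forall x, in_ball p N x ->
     hnorm (hsub (J x) x) <= 1 / (INR (M (S i)) + 1) ->
     nm (hsub x0 x) < INR (S i) * dl ->
     exists (n : nat) (x : X),
    (n <= 24 * N * (M R0 + 1) ^ 2)%nat /\
    in_ball p N x /\
    hnorm (hsub (J x) x) <= 1 / (INR (f n) + 1) /\
    (forall y : X, in_ball p N y ->
       hnorm (hsub (J y) y) <= 1 / (INR n + 1) ->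
       hinner (hsub x0 x) (hsub y x) <= 1 / (INR k + 1))).
  { induction i as [|i IH]; intros Hi x Hxb Hxt Hxd.
    - destruct (Step 0%nat Hi x Hxb Hxt) as [G|[z [_ [_ Hz]]]]; [exact G|].
      pose proof (nm_nonneg (hsub x0 z)). simpl INR in Hxd. lra.
    - destruct (Step (S i) Hi x Hxb Hxt) as [G|[z [Hzb [Hzt Hz]]]]; [exact G|].
      apply (IH ltac:(lia) z Hzb Hzt). rewrite (S_INR (S i)) in Hxd. lra. }
  assert (Hpp : nm (hsub p p) = 0) by (unfold hsub, nm; rewrite hadd_opp; apply inner0l).
  assert (HJp : nm (hsub (J p) p) = 0).
  { pose proof (hmon _ _ _ _ (hJ p) hp) as H. pose proof (nm_nonneg (hsub (J p) p)).
    hexp. sy X p (J p). lra. }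
  apply (Claim R0 (le_n _) p).
  - apply sq_hnorm; [apply pos_INR|]. rewrite Hpp. nra.
  - apply sq_hnorm; [unfold Rdiv; rewrite Rmult_1_l; left; apply Rinv_0_lt_compat; pose proof (pos_INR (M (S R0))); lra|].
    rewrite HJp. apply pow_le. unfold Rdiv; rewrite Rmult_1_l; left; apply Rinv_0_lt_compat; pose proof (pos_INR (M (S R0))); lra.
  - assert (H1 : hnorm (hsub x0 p) <= INR N / 2) by lra.
    apply hnorm_sq in H1.
    assert (HR : INR R0 * dl = INR N ^ 2).
    { unfold R0. rewrite !mult_INR, !pow_INR, plus_INR. replace (INR 4) with 4 by (simpl; lra).
      simpl (INR 1). unfold dl. field. lra. }
    rewrite S_INR. nra.
Qed.
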